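(* A finite graph is $\mathcal{C}$-$\mathrm{MI}$ if and only if it is isomorphic to a disjoint union of copies of one of the following: (i) a complete graph $K_n$ ($n\ge1$); (ii) a complete bipartite graph $K_{s,s}$ with parts of the same size ($s\ge2$); (iii) a cycle $C_n$ ($n\ge3$).
   Context: Graphs are simple; subgraphs are induced. A homomorphism of graphs maps edges to edges; a monomorphism is an injective homomorphism; an automorphism is a bijective endomorphism whose inverse is also a homomorphism. A graph $G$ is $\mathcal{C}$-$\mathrm{MI}$ if every monomorphism from a finite connected induced subgraph of $G$ into $G$ extends to an automorphism of $G$. *)

(* Defs.v *)
(* Finite simple graphs: a symmetric irreflexive relation on a finType. *)
From mathcomp Require Import all_boot.
Set Implicit Arguments. Unset Strict Implicit. Unset Printing Implicit Defensive.

Definition connected_in (T : finType) (e : rel T) (A : {set T}) : bool :=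
  (A != set0) &&
  [forall x in A, forall y in A,
     connect (fun u v => [&& u \in A, v \in A & e u v]) x y].

(* Every monomorphism from a finite connected induced subgraph into G extends to
   an automorphism of G.  A map on A is represented by a total map T -> T
   (its values outside A are irrelevant). *)
Definition CMI (T : finType) (e : rel T) : Prop :=
  forall (A : {set T}), connected_in e A ->
  forall f : T -> T,
    {in A &, injective f} ->
    {in A &, forall x y, e x y -> e (f x) (f y)} ->
    exists g : T -> T,
      [/\ bijective g, (forall x y, e (g x) (g y) = e x y) & {in A, forall x, g x = f x}].

Definition graph_iso (T U : finType) (e : rel T) (e' : rel U) : Prop :=
  exists f : T -> U, bijective f /\ (forall x y, e' (f x) (f y) = e x y).

Definition copies (k : nat) {V : finType} (eV : rel V) : rel ('I_k * V) :=
  fun p q => (p.1 == q.1) && eV p.2 q.2.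

Arguments copies k {V} eV.

Definition complete_graph (n : nat) : rel 'I_n := fun i j => i != j.

Definition Kss (s : nat) : rel (bool * 'I_s) := fun p q => p.1 != q.1.

Definition cycle_graph (n : nat) : rel 'I_n :=
  fun i j => (val j == (val i).+1 %% n) || (val i == (val j).+1 %% n).

Arguments complete_graph n : clear implicits.
Arguments Kss s : clear implicits.
Arguments cycle_graph n : clear implicits.

(* Main.v *)
Require Import Defs.
From mathcomp Require Import all_boot zify.
From mathcomp Require Import ssralg zmodp ring.
Set Implicit Arguments. Unset Strict Implicit. Unset Printing Implicit Defensive.

Lemma connect_homo (T U : finType) (r : rel T) (r' : rel U) (h : T -> U) :
  (forall u v, r u v -> r' (h u) (h v)) ->
  forall x y, connect r x y -> connect r' (h x) (h y).
Proof.
move=> H x y /connectP [p pth ->].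
elim: p x pth => [|z p IH] x /=; first by rewrite connect0.
case/andP => rxz pth; exact: connect_trans (connect1 (H _ _ rxz)) (IH _ pth).
Qed.

Section Gen.
Variables (T : finType) (e : rel T).
Hypotheses (e_sym : symmetric e) (e_irr : irreflexive e).

Definition rin (A : {set T}) := fun u v => [&& u \in A, v \in A & e u v].

Lemma rin_sym A : symmetric (rin A).
Proof. by move=> u v; rewrite /rin e_sym; case: (u \in A); case: (v \in A). Qed.

Lemma rin_connect_sym A x y : connect (rin A) x y = connect (rin A) y x.
Proof. exact: (sym_connect_sym (rin_sym A)). Qed.

Lemma emb (H : CMI e) (A : {set T}) (f : T -> T) :
  connected_in e A -> {in A &, injective f} ->
  {in A &, forall x y, e x y -> e (f x) (f y)} ->
  {in A &, forall x y, e (f x) (f y) = e x y}.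
Proof.
move=> cA fi fh; have [g [_ ge gf]] := H A cA f fi fh.
by move=> x y xA yA; rewrite -gf // -(gf y) // ge.
Qed.

Lemma connected1 x : connected_in e [set x].
Proof.
apply/andP; split; first by apply/set0Pn; exists x; rewrite inE.
by apply/forallP => a; apply/implyP; rewrite inE => /eqP->; apply/forallP => b;
  apply/implyP; rewrite inE => /eqP->; rewrite connect0.
Qed.

Definition auto (g : T -> T) := bijective g /\ forall a b, e (g a) (g b) = e a b.

Lemma vt (H : CMI e) x y : exists g, auto g /\ g x = y.
Proof.
have i1 : {in [set x] &, injective (fun _ : T => y)}.
  by move=> a b; rewrite !inE => /eqP-> /eqP->.
have h1 : {in [set x] &, forall a b, e a b -> e ((fun _ : T => y) a) ((fun _ => y) b)}.
  by move=> a b; rewrite !inE => /eqP-> /eqP->; rewrite e_irr.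
have [g [gb ge gf]] := H [set x] (connected1 x) (fun _ => y) i1 h1.
by exists g; split => //; apply: gf; rewrite inE.
Qed.

Lemma auto_inv g : auto g -> exists h, [/\ auto h, cancel g h & cancel h g].
Proof.
case=> [[h gh hg] ge]; exists h; split => //; split; first by exists g.
by move=> a b; rewrite -ge !hg.
Qed.

Lemma auto_connect g x y : auto g -> connect e x y -> connect e (g x) (g y).
Proof. by case=> _ ge; apply: connect_homo => u v; rewrite ge. Qed.

End Gen.


Section Glue.
Variables (T : finType) (e : rel T).
Hypotheses (e_sym : symmetric e) (e_irr : irreflexive e).

Lemma glue (V : finType) (eV : rel V) (v0 : T) (psi : V -> T) :
  (forall r, exists g, auto e g /\ g v0 = r) ->
  injective psi -> (forall v, connect e v0 (psi v)) ->
  (forall x, connect e v0 x -> exists v, psi v = x) ->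
  (forall v w, e (psi v) (psi w) = eV v w) ->
  exists k, graph_iso e (copies k eV).
Proof.
move=> VT psii psiC Cpsi psie.
have cs := sym_connect_sym e_sym.
have [sg Hsg] : exists sg : T -> (T -> T) * (T -> T), forall r,
    [/\ auto e (sg r).1, cancel (sg r).1 (sg r).2, cancel (sg r).2 (sg r).1 & (sg r).1 v0 = r].
  pose P (r : T) (p : (T -> T) * (T -> T)) :=
    [/\ auto e p.1, cancel p.1 p.2, cancel p.2 p.1 & p.1 v0 = r].
  have HP : forall r, exists p, P r p.
    move=> r; have [g [ga gr]] := VT r.
    have [h [ha gh hg]] := auto_inv ga; by exists (g, h).
  have [sg Hs] := @fin_all_exists T (fun _ => ((T -> T) * (T -> T))%type) P HP.
  by exists sg.
have [vd _] := Cpsi v0 (connect0 _ _).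
pose phi y := odflt vd [pick v | psi v == y].
have phiK : cancel psi phi.
  move=> v; rewrite /phi; case: pickP => [w /eqP /psii -> // | /(_ v)]; by rewrite eqxx.
have psiK : forall x, connect e v0 x -> psi (phi x) = x.
  move=> x /Cpsi [v <-]; by rewrite phiK.
set R := [set x | root e x == x].
have rR : forall x, root e x \in R by move=> x; rewrite inE root_root.
have r0 := rR v0.
pose F (p : 'I_#|R| * V) := (sg (enum_val p.1)).1 (psi p.2).
pose G x := (enum_rank_in r0 (root e x), phi ((sg (root e x)).2 x)).
have rootF : forall p, root e (F p) = enum_val p.1.
  move=> [i v]; rewrite /F /=; set r := enum_val i.
  have rr : root e r = r by have := enum_valP i; rewrite inE => /eqP.
  case: (Hsg r) => ga _ _ gv.
  have := auto_connect ga (psiC v); rewrite gv => /(rootP cs) <-; exact: rr.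
have FK : cancel F G.
  move=> [i v]; rewrite /G rootF enum_valK_in /F /=.
  by case: (Hsg (enum_val i)) => _ -> _ _; rewrite phiK.
have GK : cancel G F.
  move=> x; rewrite /F /G /= (enum_rankK_in _ (rR x)); set r := root e x.
  case: (Hsg r) => ga gh hg gv.
  have ha : auto e (sg r).2.
    split; first by exists (sg r).1.
    by move=> a b; case: ga => _ <-; rewrite !hg.
  have : connect e v0 ((sg r).2 x).
    rewrite -{1}(gh v0) gv; apply: auto_connect ha _.
    by rewrite cs; apply: connect_root.
  by move/psiK ->; rewrite hg.
have Fe : forall p q, e (F p) (F q) = copies #|R| eV p q.
  move=> [i v] [j w]; rewrite /copies /=.
  case: (eqVneq i j) => [<- | ij] /=.
    by rewrite /F /=; case: (Hsg (enum_val i)) => [[_ ->]] _ _ _; rewrite psie.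
  apply/negP => /connect1 /(rootP cs); rewrite !rootF => /enum_val_inj ij'.
  by move: ij'; rewrite /= => ij'; rewrite ij' eqxx in ij.
exists (#|R|); rewrite /graph_iso; exists G; split; first by exists F.
by move=> x y; rewrite -Fe !GK.
Qed.
End Glue.


Section Fwd1.
Variables (T : finType) (e : rel T).
Hypotheses (e_sym : symmetric e) (e_irr : irreflexive e).

Definition walk (p : nat -> T) j :=
  (forall i, i.+1 < j -> e (p i) (p i.+1)) /\
  (forall i k, i < j -> k < j -> p i = p k -> i = k).

Definition ind (p : nat -> T) j :=
  forall i k, i < j -> k < j -> e (p i) (p k) = (i == k.+1) || (k == i.+1).

Lemma ind_le p j j' : j' <= j -> ind p j -> ind p j'.
Proof. by move=> le H i k ij kj; apply: H; apply: leq_trans le. Qed.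

Lemma walk_le p j j' : j' <= j -> walk p j -> walk p j'.
Proof.
move=> le [H1 H2]; split=> [i ij|i k ij kj]; [apply: H1|apply: H2];
  by apply: leq_trans le.
Qed.

Lemma walk_shift p j a : walk p (a + j) -> walk (fun t => p (a + t)) j.
Proof.
case=> H1 H2; split=> [i ij|i k ij kj /H2].
  by rewrite addnS; apply: H1; rewrite -addnS ltn_add2l.
by rewrite !ltn_add2l => /(_ ij kj) /eqP; rewrite eqn_add2l => /eqP.
Qed.

Definition Aw (p : nat -> T) j := [set x | [exists t : 'I_j, p t == x]].

Lemma Aw_in p j t : t < j -> p t \in Aw p j.
Proof. by move=> tj; rewrite inE; apply/existsP; exists (Ordinal tj). Qed.

Lemma walk_connect p j : walk p j -> forall i, i < j ->
  connect (rin e (Aw p j)) (p 0) (p i).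
Proof.
case=> H1 _; elim=> [|i IH] ij; first exact: connect0.
apply: connect_trans (IH (ltnW ij)) (connect1 _).
by rewrite /rin !Aw_in ?H1 // ltnW.
Qed.

Lemma walk_conn p j : 0 < j -> walk p j -> connected_in e (Aw p j).
Proof.
move=> j0 w; apply/andP; split; first by apply/set0Pn; exists (p 0); exact: Aw_in.
apply/forallP => x; apply/implyP; rewrite inE => /existsP [[a aj] /eqP <-].
apply/forallP => y; apply/implyP; rewrite inE => /existsP [[b bj] /eqP <-] /=.
apply: connect_trans (walk_connect w bj).
by rewrite rin_connect_sym //; apply: walk_connect.
Qed.

Lemma key (H : CMI e) p q j : 0 < j -> ind p j -> walk p j -> walk q j -> ind q j.
Proof.
move=> j0 ip wp wq.
pose idx x := if [pick t : 'I_j | p t == x] is Some t then val t else 0.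
have idxK : forall t, t < j -> idx (p t) = t.
  move=> t tj; rewrite /idx; case: pickP => [s /eqP ps|/(_ (Ordinal tj))].
    exact: (proj2 wp) _ _ (ltn_ord s) tj ps.
  by rewrite /= eqxx.
set f := fun x => q (idx x).
have fi : {in Aw p j &, injective f}.
  move=> _ _ /[!inE] /existsP [[a aj] /eqP <-] /existsP [[b bj] /eqP <-] /=.
  by rewrite /f !idxK // => /((proj2 wq) _ _ aj bj) ->.
have fh : {in Aw p j &, forall x y, e x y -> e (f x) (f y)}.
  move=> _ _ /[!inE] /existsP [[a aj] /eqP <-] /existsP [[b bj] /eqP <-] /=.
  rewrite /f !idxK // ip // => /orP [] /eqP E; subst.
    by rewrite e_sym; apply: (proj1 wq).
  by apply: (proj1 wq).
have E := emb H (walk_conn j0 wp) fi fh.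
move=> a b aj bj; rewrite -ip //.
by have := E (p a) (p b) (@Aw_in p j a aj) (@Aw_in p j b bj); rewrite /f !idxK.
Qed.

End Fwd1.


Section Fwd2.
Variables (T : finType) (e : rel T).
Hypotheses (e_sym : symmetric e) (e_irr : irreflexive e).

Lemma neq_of_e x y : e x y -> x != y.
Proof. by apply: contraL => /eqP ->; rewrite e_irr. Qed.

Lemma lw_walk x0 (s : seq T) : uniq s ->
  (forall i, i.+1 < size s -> e (nth x0 s i) (nth x0 s i.+1)) ->
  walk e (fun i => nth x0 s i) (size s).
Proof.
move=> us H; split=> // i k ik jk /eqP.
by rewrite nth_uniq // => /eqP.
Qed.

Lemma walk4 a b c d : e a b -> e b c -> e c d -> a != c -> a != d -> b != d ->
  walk e (fun i => nth a [:: a; b; c; d] i) 4.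
Proof.
move=> ab bc cd ac ad bd; apply: (@lw_walk a [:: a; b; c; d]) => [|i].
  rewrite /= !inE !negb_or ac ad bd (neq_of_e ab) (neq_of_e bc) (neq_of_e cd).
  by [].
by case: i => [|[|[|i]]].
Qed.

Lemma walk3 a b c : e a b -> e b c -> a != c ->
  walk e (fun i => nth a [:: a; b; c] i) 3.
Proof.
move=> ab bc ac; apply: (@lw_walk a [:: a; b; c]) => [|i].
  by rewrite /= !inE !negb_or ac (neq_of_e ab) (neq_of_e bc).
by case: i => [|[|i]].
Qed.

Lemma ind4 a b c d : e a b -> e b c -> e c d -> ~~ e a c -> ~~ e a d -> ~~ e b d ->
  ind e (fun i => nth a [:: a; b; c; d] i) 4.
Proof.
move=> ab bc cd /negbTE ac /negbTE ad /negbTE bd.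
move=> i k; case: i => [|[|[|[|i]]]]; case: k => [|[|[|[|k]]]] //= _ _;
  rewrite ?e_irr //; rewrite e_sym //.
Qed.

Lemma ind3 a b c : e a b -> e b c -> ~~ e a c ->
  ind e (fun i => nth a [:: a; b; c] i) 3.
Proof.
move=> ab bc /negbTE ac.
move=> i k; case: i => [|[|[|i]]]; case: k => [|[|[|k]]] //= _ _;
  rewrite ?e_irr //; rewrite e_sym //.
Qed.

Lemma ind4_dist a b c d : e a b -> e b c -> e c d -> ~~ e a c -> ~~ e a d -> ~~ e b d ->
  [/\ a != c, a != d & b != d].
Proof.
move=> ab bc cd nac nad nbd; split.
- by apply: (contraNneq _ nad) => E; rewrite E.
- by apply: (contraNneq _ nac) => E; rewrite E e_sym.
- by apply: (contraNneq _ nad) => E; rewrite -E.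
Qed.

Definition P4free := forall a b c d, e a b -> e b c -> e c d -> ~~ e a c -> ~~ e a d -> ~~ e b d -> False.

Definition Nb x := [set y | e x y].

Lemma deg_reg (H : CMI e) x y : #|Nb x| = #|Nb y|.
Proof.
have [g [[[h gh hg] ge] gx]] := vt e_irr H x y.
rewrite -(card_imset _ (can_inj gh)); apply: eq_card => z.
rewrite !inE; apply/imsetP/idP => [[w] /[!inE] xw -> | yz].
  by rewrite -gx ge.
by exists (h z); rewrite ?hg // inE -ge hg gx.
Qed.

Lemma clique_of_noP3 :
  (forall a b c, e a b -> e b c -> a != c -> e a c) ->
  forall x y, connect e x y -> x != y -> e x y.
Proof.
move=> H x y cxy.
have cl : closed e [pred z | (z == x) || e x z].
  apply: intro_closed; first exact: sym_connect_sym.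
  move=> u v uv; rewrite !inE => /orP [/eqP ? | xu]; first by subst u; rewrite uv orbT.
  case: (eqVneq v x) => //= vx; apply: H xu uv _.
  by rewrite eq_sym.
have := closed_connect cl cxy; rewrite !inE eqxx /= => /esym; case: eqVneq => // ->; by rewrite eqxx.
Qed.

Lemma triangle_free (H : CMI e) a b c : e a b -> e b c -> ~~ e a c -> a != c ->
  forall x y z, e x y -> e y z -> ~~ e x z.
Proof.
move=> ab bc nac ac x y z xy yz; apply/negP => xz.
have xz' : x != z by apply: neq_of_e.
have := key e_sym H (isT : 0 < 3) (ind3 ab bc nac) (walk3 ab bc ac) (walk3 xy yz xz').
by move=> /(_ 0 2 isT isT) /=; rewrite xz.
Qed.
End Fwd2.


Section Fwd3.
Variables (T : finType) (e : rel T).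
Hypotheses (e_sym : symmetric e) (e_irr : irreflexive e).

Lemma ind_half p j :
  (forall i k, i < k -> k < j -> e (p i) (p k) = (k == i.+1)) -> ind e p j.
Proof.
move=> H i k ij kj; case: (ltngtP i k) => [ik|ki|<-].
- by rewrite H // orbC; case: eqP => //; lia.
- by rewrite e_sym H //; case: eqP => //; lia.
- by rewrite e_irr; case: eqP; lia.
Qed.

Lemma walk_bound p j : walk e p j -> j <= #|T|.
Proof.
case=> _ inj; have fi : injective (fun i : 'I_j => p i).
  by move=> [a aj] [b bj] /= /(inj _ _ aj bj) E; apply: val_inj.
by have := leq_card _ fi; rewrite card_ord.
Qed.

Lemma extend (H : CMI e) (deg3 : forall x, 2 < #|Nb e x|) p m :
  3 < m -> ind e p m -> walk e p m -> exists q, ind e q m.+1 /\ walk e q m.+1.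
Proof.
move=> m3 ip wp.
set x := p m.-1; set z := p m.-2.
have zx : e z x by rewrite /x /z ip; lia.
have [y1 [y2 [y1S y2S y12]]] : exists y1 y2, [/\ y1 \in Nb e x :\ z, y2 \in Nb e x :\ z & y1 != y2].
  apply/card_gt1P; have := deg3 x; rewrite (cardsD1 z) inE e_sym zx; lia.
have HS : forall y, y \in Nb e x :\ z ->
    e (p 0) y \/ exists q, ind e q m.+1 /\ walk e q m.+1.
  move=> y; rewrite !inE => /andP [yz xy].
  case: (boolP (e (p 0) y)) => [|n0y]; [by left | right].
  pose q i := if i == m then y else p i.
  have ynp : forall t, t < m -> y != p t.
    move=> t tm; apply/eqP => E; move: xy; rewrite E /x ip //; last lia.
    move=> /orP [/eqP E1|/eqP E1]; last lia.
    have tm2 : t = m.-2 by lia.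
    by move: yz; rewrite E /z tm2 eqxx.
  have wq : walk e q m.+1.
    split=> [i im|i k im km].
      rewrite /q; case: (eqVneq i.+1 m) => [E|ne].
        rewrite ifN; last by lia.
        have -> : i = m.-1 by lia.
        exact: xy.
      rewrite ifN; last by lia.
      by apply: (proj1 wp); lia.
    rewrite /q; case: (eqVneq i m) => [->|im']; case: (eqVneq k m) => [->|km'] //.
    - by move=> E; move: (ynp k (ltac:(lia))); rewrite E eqxx.
    - by move=> E; move: (ynp i (ltac:(lia))); rewrite E eqxx.
    - by apply: (proj2 wp); lia.
  exists q; split=> //; apply: ind_half => i k ik km.
  rewrite /q; case: (eqVneq k m) => [E|km']; last first.
    rewrite ifN; last by lia.
    by rewrite ip; lia.
  subst k; rewrite ifN; last by lia.
  case: (eqVneq i m.-1) => [->|im1].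
    by rewrite -/x xy; case: eqP => //; lia.
  case: (eqVneq i 0) => [->|i0].
    by rewrite (negbTE n0y); case: eqP => //; lia.
  set L := m.+1 - i.
  have wr : walk e (fun t => q (i + t)) L.
    by apply: walk_shift; have -> : i + L = m.+1 by rewrite /L; lia.
  have ipL : ind e p L by apply: ind_le ip; rewrite /L; lia.
  have wpL : walk e p L by apply: walk_le wp; rewrite /L; lia.
  have L0 : 0 < L by rewrite /L; lia.
  have := key e_sym H L0 ipL wpL wr (ltac:(lia) : 0 < L) (ltac:(lia) : L.-1 < L).
  rewrite /= /q addn0 ifN; last by lia.
  have -> : i + L.-1 = m by rewrite /L; lia.
  rewrite eqxx => ->.
  have L2 : 2 < L by rewrite /L; lia.
  case: eqP; case: eqP => //=; lia.
case: (HS _ y1S) => [h1|//]; case: (HS _ y2S) => [h2|//].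
exfalso.
move: y1S y2S; rewrite !inE => /andP [_ xy1] /andP [_ xy2].
have p0x : p 0 != x.
  apply/eqP => /(proj2 wp) E; have := E (ltac:(lia)) (ltac:(lia)); lia.
have ws : walk e (fun i => nth y2 [:: y2; p 0; y1; x] i) 4.
  apply: (@lw_walk _ _ y2 [:: y2; p 0; y1; x]) => [|i].
    rewrite /= !inE !negb_or eq_sym (neq_of_e e_irr h2) eq_sym y12 /=.
    rewrite eq_sym (neq_of_e e_irr xy2) (neq_of_e e_irr h1) p0x /=.
    by rewrite eq_sym (neq_of_e e_irr xy1).
  case: i => [|[|[|i]]] //= _; by rewrite e_sym.
have ip4 : ind e p 4 by apply: ind_le ip; lia.
have wp4 : walk e p 4 by apply: walk_le wp; lia.
have := key e_sym H (isT : 0 < 4) ip4 wp4 ws (isT : 0 < 4) (isT : 3 < 4).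
by rewrite /= e_sym xy2.
Qed.

Lemma deg3_P4free (H : CMI e) (deg3 : forall x, 2 < #|Nb e x|) : P4free e.
Proof.
move=> a b c d ab bc cd nac nad nbd.
have [ac ad bd] := ind4_dist e_sym ab bc cd nac nad nbd.
have : forall t, exists q, ind e q (4 + t) /\ walk e q (4 + t).
  elim=> [|t [q [iq wq]]].
    exists (fun i => nth a [:: a; b; c; d] i); split.
      exact: (ind4 e_sym e_irr ab bc cd nac nad nbd).
    exact: (walk4 e_irr ab bc cd ac ad bd).
  rewrite addnS; apply: (extend H deg3 _ iq wq); lia.
move=> /(_ #|T|) [q [_ /walk_bound]]; lia.
Qed.
End Fwd3.


Section Fwd4.
Variables (T : finType) (e : rel T).
Hypotheses (e_sym : symmetric e) (e_irr : irreflexive e).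

Lemma bip_iso (H : CMI e) (tf : forall x y z, e x y -> e y z -> ~~ e x z)
  (p4 : P4free e) v0 (d1 : 0 < #|Nb e v0|) :
  exists k, graph_iso e (copies k (Kss #|Nb e v0|)).
Proof.
have cs := sym_connect_sym e_sym.
have D : forall x, connect e v0 x ->
    [|| x == v0, e v0 x | [exists w, e v0 w && e w x]].
  move=> x cx.
  have cl : closed e [pred x | [|| x == v0, e v0 x | [exists w, e v0 w && e w x]]].
    apply: (intro_closed cs); move=> u v uv; rewrite !inE.
    case/or3P => [/eqP E|v0u|/existsP [w /andP [v0w wu]]].
    - by rewrite -E uv orbT.
    - by apply/or3P; apply: Or33; apply/existsP; exists u; rewrite v0u.
    case: (eqVneq v v0) => //= vv0; case: (boolP (e v0 v)) => //= nv0v.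
    case: (boolP (e w v)) => [wv|nwv]; first by apply/existsP; exists w; rewrite v0w.
    case: (boolP (e v0 u)) => [v0u|nv0u]; last by case: (p4 _ _ _ _ v0w wu uv nv0u nv0v nwv).
    by apply/existsP; exists u; rewrite v0u.
  by have := closed_connect cl cx; rewrite !inE eqxx /= => <-.
set N := Nb e v0.
set M := [set x | connect e v0 x && ~~ e v0 x].
have NI : forall x y, x \in N -> y \in N -> ~~ e x y.
  by move=> x y; rewrite !inE => xN yN; apply: (tf x v0 y) => //; rewrite e_sym.
have MI : forall x y, x \in M -> y \in M -> ~~ e x y.
  move=> x y; rewrite !inE => /andP [cx nx] /andP [cy ny]; apply/negP => xy.
  case/or3P: (D _ cx) => [/eqP xv|v0x|/existsP [w /andP [v0w wx]]].
  - by move: ny; rewrite -xv xy.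
  - by rewrite v0x in nx.
  case: (eqVneq y v0) => [yv|yv].
    by move: nx; rewrite -yv e_sym xy.
  case: (boolP (e w y)) => [wy|nwy]; first by move: (tf _ _ _ wx xy); rewrite wy.
  exact: (p4 _ _ _ _ v0w wx xy nx ny nwy).
have NM : forall x y, x \in N -> y \in M -> e x y.
  move=> x y xN; rewrite inE => /andP [cy ny].
  case/or3P: (D _ cy) => [/eqP E|v0y|/existsP [w /andP [v0w wy]]].
  - by move: xN; rewrite E inE e_sym.
  - by rewrite v0y in ny.
  case: (eqVneq x w) => [-> //|xw].
  apply/negPn/negP => nxy.
  have nxw : ~~ e x w by apply: NI => //; rewrite inE.
  by apply: (p4 _ _ _ _ _ v0w wy nxw nxy ny); move: xN; rewrite inE e_sym.
have MN : forall x, x \in M -> x \in N -> False.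
  by move=> x; rewrite !inE => /andP [_ /negbTE ->].
have [y0 y0N] : exists y0, y0 \in N by apply/set0Pn; rewrite -card_gt0.
have HM : #|M| = #|N|.
  rewrite /N (deg_reg e_irr H v0 y0); apply: eq_card => z.
  apply/idP/idP => [zM | ].
    by rewrite inE; apply: NM.
  rewrite inE => y0z; rewrite inE; apply/andP; split.
    by apply: connect_trans (connect1 _) (connect1 y0z); move: y0N; rewrite inE.
  apply/negP => v0z; have zN : z \in N by rewrite inE.
  by move: (NI _ _ y0N zN); rewrite y0z.
pose psi (p : bool * 'I_#|N|) :=
  if p.1 then enum_val (cast_ord (esym HM) p.2) else enum_val p.2.
have psiM : forall i, psi (true, i) \in M by move=> i; exact: enum_valP.
have psiN : forall i, psi (false, i) \in N by move=> i; exact: enum_valP.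
apply: (@glue _ _ e_sym _ _ v0 psi).
- by move=> r; exact: vt.
- move=> [[] i] [[] j] //=.
  + by move/enum_val_inj/cast_ord_inj => /= ->.
  + by move=> E; case: (MN _ (psiM i)); rewrite [psi _]E psiN.
  + by move=> E; case: (MN _ (psiM j)); rewrite -[psi (true, _)]E psiN.
  + by move/enum_val_inj => /= ->.
- move=> [[] i].
    by have := psiM i; rewrite inE => /andP [].
  by have := psiN i; rewrite inE => v0p; apply: connect1.
- move=> x cx; case: (boolP (e v0 x)) => v0x.
    have xN : x \in N by rewrite inE.
    by exists (false, enum_rank_in xN x); rewrite /psi /= enum_rankK_in.
  have xM : x \in M by rewrite inE cx.
  exists (true, cast_ord HM (enum_rank_in xM x)).
  by rewrite /psi /= cast_ordK enum_rankK_in.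
- move=> [b i] [c j]; rewrite /Kss /=.
  case: b; case: c => /=.
  + by apply/negbTE; apply: MI.
  + by rewrite e_sym; apply: NM.
  + by apply: NM.
  + by apply/negbTE; apply: NI.
Qed.
End Fwd4.


Section Fwd5.
Variables (T : finType) (e : rel T).
Hypotheses (e_sym : symmetric e) (e_irr : irreflexive e).

Lemma cyc_iso (H : CMI e) (v0 : T) (deg2 : forall x, #|Nb e x| = 2) :
  exists n, 3 <= n /\ exists k, graph_iso e (copies k (cycle_graph n)).
Proof.
have cs := sym_connect_sym e_sym.
have [u v0u] : exists u, e v0 u.
  have : 0 < #|Nb e v0| by rewrite deg2.
  by rewrite card_gt0 => /set0Pn [u]; rewrite inE; exists u.
have [u' /andP [u'v0 uu']] : exists u', (u' != v0) && e u u'.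
  have : 0 < #|Nb e u :\ v0|.
    by have := deg2 u; rewrite (cardsD1 v0) inE e_sym v0u; lia.
  by rewrite card_gt0 => /set0Pn [y]; rewrite !inE; exists y.
set A := [set v0; u].
have cA : connected_in e A.
  apply/andP; split; first by apply/set0Pn; exists v0; rewrite !inE eqxx.
  have c1 : connect (rin e A) v0 u by apply: connect1; rewrite /rin !inE !eqxx orbT v0u.
  apply/forallP => a; apply/implyP; rewrite !inE => /orP [] /eqP ->;
  apply/forallP => b; apply/implyP; rewrite !inE => /orP [] /eqP -> //;
  by rewrite ?connect0 // rin_connect_sym.
pose f x := if x == v0 then u else u'.
have uv0 : u != v0 by rewrite eq_sym (neq_of_e e_irr v0u).
have fi : {in A &, injective f}.
  move=> a b; rewrite !inE /f => /orP [] /eqP -> /orP [] /eqP ->;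
  rewrite ?eqxx ?(negbTE uv0) // => E.
  - by move: uu'; rewrite E e_irr.
  - by move: uu'; rewrite E e_irr.
have fh : {in A &, forall x y, e x y -> e (f x) (f y)}.
  move=> a b; rewrite !inE /f => /orP [] /eqP -> /orP [] /eqP ->;
  rewrite ?eqxx ?(negbTE uv0) ?e_irr // => _; by rewrite // e_sym.
have [rho [rb re rf]] := H A cA f fi fh.
have rv0 : rho v0 = u by rewrite rf ?inE ?eqxx // /f eqxx.
have ru : rho u = u' by rewrite rf ?inE ?eqxx ?orbT // /f (negbTE uv0).
have ri : injective rho := bij_inj rb.
pose w i := iter i rho v0.
have ite : forall i a b, e (iter i rho a) (iter i rho b) = e a b.
  by elim=> [//|i IH] a b; rewrite !iterS re IH.
have wS : forall i, e (w i) (w i.+1) by move=> i; rewrite /w iterSr rv0 ite.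
set n := order rho v0.
have wn : w n = v0 by apply: iter_order.
have wkn : forall k, iter (k * n) rho v0 = v0.
  elim=> [//|k IH]; rewrite mulSn addnC iterD.
  by have -> : iter n rho v0 = v0 by exact: wn.
have wmod : forall a, w a = w (a %% n).
  move=> a; rewrite /w {1}(divn_eq a n) addnC iterD wkn //.
have winj : forall a b, a < n -> b < n -> w a = w b -> a = b.
  move=> a b an bn E; rewrite -(findex_iter an) -(findex_iter bn); by rewrite /w in E; rewrite E.
have w2 : w 2 != v0.
  by rewrite /w /= rv0 ru.
have n3 : 3 <= n.
  have n0 : 0 < n by apply: order_gt0.
  case: (ltnP n 3) => // n3; exfalso.
  have : (n == 1) || (n == 2) by lia.
  case/orP => /eqP n12.
    by move: (wmod 1); rewrite n12 modnn /w /= rv0; apply/eqP.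
  by move: (wmod 2); rewrite n12 modnn /w /=; apply/eqP.
have wC : forall a, connect e v0 (w a).
  elim=> [|a IH]; first exact: connect0.
  exact: connect_trans IH (connect1 (wS a)).
have nb : forall a y, e (w a) y -> (y == w a.+1) || (y == w (a + n).-1).
  move=> a y ay.
  set p := w a.+1; set q := w (a + n).-1.
  have aq : e (w a) q.
    rewrite e_sym /q; have := wS (a + n).-1.
    have -> : (a + n).-1.+1 = a + n by lia.
    by rewrite (wmod (a + n)) modnDr -wmod.
  have pq : p != q.
    apply/eqP; rewrite /p /q wmod [w (a + n).-1]wmod => /winj E.
    have {E} : a.+1 %% n = (a + n).-1 %% n by apply: E; apply: ltn_pmod; lia.
    have -> : (a + n).-1 = a.+1 + (n - 2) by lia.
    move/eqP; rewrite -{1}[a.+1]addn0 eqn_modDl mod0n modn_small; lia.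
  have S2 : Nb e (w a) = [set p; q].
    apply/esym/eqP; rewrite eqEcard cards2 pq deg2 leqnn andbT.
    by apply/subsetP => z; rewrite !inE => /orP [] /eqP ->; rewrite ?aq // wS.
  have yN : y \in Nb e (w a) by rewrite inE.
  by move: yN; rewrite S2 !inE.
have Cw : forall x, connect e v0 x -> exists2 a, a < n & w a = x.
  move=> x cx.
  have cl : closed e [pred z | fconnect rho v0 z].
    apply: (intro_closed cs) => a b ab; rewrite !inE => /iter_findex E.
    rewrite -E in ab.
    by case/orP: (nb _ _ ab) => /eqP ->; apply: fconnect_iter.
  have := closed_connect cl cx; rewrite !inE connect0 => /esym fx.
  by exists (findex rho v0 x); [apply: findex_max | apply: iter_findex].
exists n; split => //.
apply: (@glue _ _ e_sym _ _ v0 (fun i : 'I_n => w i)).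
- by move=> r; exact: vt.
- by move=> [i ip] [j jp] /= /(winj _ _ ip jp) E; apply: val_inj.
- by move=> i; exact: wC.
- by move=> x /Cw [a an <-]; exists (Ordinal an).
move=> [i ip] [j jp]; rewrite /cycle_graph /=.
apply/idP/idP.
- move/nb => /orP [] /eqP E.
    apply/orP; left; apply/eqP; apply: winj => //; first by apply: ltn_pmod; lia.
    by rewrite E [w i.+1]wmod.
  apply/orP; right; apply/eqP; apply: winj => //; first by apply: ltn_pmod; lia.
  rewrite -[w (j.+1 %% n)]wmod.
  have -> : w j.+1 = rho (w j) by [].
  rewrite E; have -> : rho (w (i + n).-1) = w (i + n).-1.+1 by [].
  have -> : (i + n).-1.+1 = i + n by lia.
  by rewrite [w (i + n)]wmod modnDr modn_small.
- case/orP => /eqP E.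
    by rewrite E -wmod; exact: wS.
  by rewrite E -wmod e_sym; exact: wS.
Qed.
End Fwd5.


Lemma cmi_iso (T U : finType) (e : rel T) (e' : rel U) :
  graph_iso e e' -> CMI e' -> CMI e.
Proof.
case=> phi [[phi' pK pK'] pe] H A cA f fi fh.
have phii : injective phi := can_inj pK.
set A' := phi @: A.
have cA' : connected_in e' A'.
  case/andP: cA => ne /forallP cc; apply/andP; split.
    by case/set0Pn: ne => x xA; apply/set0Pn; exists (phi x); exact: imset_f.
  apply/forallP => x'; apply/implyP => /imsetP [x xA ->].
  apply/forallP => y'; apply/implyP => /imsetP [y yA ->].
  move: (cc x); rewrite xA /= => /forallP /(_ y); rewrite yA /=.
  apply: connect_homo => u v /and3P [uA vA euv].
  by rewrite /= !imset_f // pe.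
set f' := fun x' => phi (f (phi' x')).
have fi' : {in A' &, injective f'}.
  move=> _ _ /imsetP[x xA ->] /imsetP[y yA ->]; rewrite /f' !pK => /phii.
  by move/fi => -> //.
have fh' : {in A' &, forall x y, e' x y -> e' (f' x) (f' y)}.
  move=> _ _ /imsetP[x xA ->] /imsetP[y yA ->]; rewrite /f' !pK !pe; exact: fh.
have [g' [[h' g'K h'K] ge gf]] := H A' cA' f' fi' fh'.
exists (fun x => phi' (g' (phi x))); split.
- by exists (fun x => phi' (h' (phi x))) => x; rewrite ?pK' ?g'K ?h'K pK.
- by move=> x y; rewrite -[RHS]pe -ge -pe !pK'.
- by move=> x xA; rewrite gf ?imset_f // /f' !pK.
Qed.

Definition swp (k : nat) (i j c : 'I_k) := if c == i then j else if c == j then i else c.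

Lemma swpK k (i j : 'I_k) : involutive (swp i j).
Proof.
move=> c; rewrite /swp; case: (eqVneq c i) => [->|ci].
  by rewrite eqxx; case: eqVneq => // ->.
case: (eqVneq c j) => [->|cj]; first by rewrite eqxx.
by rewrite (negbTE ci) (negbTE cj).
Qed.

Lemma cmi_copies k (V : finType) (eV : rel V) : CMI eV -> CMI (copies k eV).
Proof.
move=> H A cA f fi fh.
have cA0 := cA; case/andP: cA0 => /set0Pn [a0 a0A] /forallP cc.
have conA : forall x, x \in A -> connect (rin (copies k eV) A) a0 x.
  by move=> x xA; move: (cc a0); rewrite a0A /= => /forallP /(_ x); rewrite xA.
set i := a0.1. set j := (f a0).1.
have A1 : forall x, x \in A -> x.1 = i.
  move=> x /conA cx; apply/eqP.
  have cl : closed (rin (copies k eV) A) [pred z | z.1 == i].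
    move=> u v /and3P [_ _ /andP [/eqP uv _]]; by rewrite !inE /= uv.
  by have := closed_connect cl cx; rewrite !inE /= eqxx => <-.
have fA1 : forall x, x \in A -> (f x).1 = j.
  move=> x xA; have cx := conA x xA; apply/eqP.
  have cl : closed (rin (copies k eV) A) [pred z | (z \in A) ==> ((f z).1 == j)].
    move=> u v /and3P [uA vA euv]; rewrite !inE /= uA vA /=.
    by have /andP[/eqP -> _] := fh _ _ uA vA euv.
  by have := closed_connect cl cx; rewrite !inE a0A xA eqxx /= => <-.
set A' := [set v | (i, v) \in A].
have Ai : forall x, x \in A -> x = (i, x.2).
  by move=> [c v] xA /=; rewrite -(A1 _ xA).
have cA' : connected_in eV A'.
  apply/andP; split.
    by apply/set0Pn; exists a0.2; rewrite inE -Ai.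
  apply/forallP => v; apply/implyP; rewrite inE => vA.
  apply/forallP => w; apply/implyP; rewrite inE => wA.
  move: (cc (i, v)); rewrite vA /= => /forallP /(_ (i, w)); rewrite wA /=.
  move/(connect_homo (r' := rin eV A') (h := snd)); apply.
  move=> u u' /and3P [uA u'A /andP [_ e2]].
  by rewrite /rin !inE -!Ai // uA u'A.
set f' := fun v => (f (i, v)).2.
have fi' : {in A' &, injective f'}.
  move=> v w; rewrite !inE => vA wA eq2.
  suff : (i, v) = (i, w) by case.
  apply: fi => //; have e1 := fA1 _ vA; have e2 := fA1 _ wA.
  move: eq2 e1 e2; rewrite /f'; case: (f (i, v)) => a b; case: (f (i, w)) => c d /=.
  by move=> -> -> ->.
have fh' : {in A' &, forall x y, eV x y -> eV (f' x) (f' y)}.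
  move=> v w; rewrite !inE => vA wA evw.
  have := fh _ _ vA wA; rewrite /copies /= eqxx evw => /(_ isT).
  by case/andP.
have [g' [[h' g'K h'K] ge gf]] := H A' cA' f' fi' fh'.
exists (fun p => (swp i j p.1, g' p.2)); split.
- by exists (fun p => (swp i j p.1, h' p.2)) => -[c v] /=; rewrite swpK ?g'K ?h'K.
- move=> [c v] [d w]; rewrite /copies /= ge.
  by rewrite (inj_eq (inv_inj (@swpK k i j))).
- move=> x xA; rewrite (Ai _ xA) /= /swp eqxx gf; last by rewrite inE -Ai.
  by rewrite /f' -Ai // -(fA1 _ xA); case: (f x).
Qed.


Lemma ext_inj (T : finType) (A : {set T}) (f : T -> T) :
  {in A &, injective f} -> exists g, bijective g /\ {in A, g =1 f}.
Proof.
move=> fi; set B := f @: A.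
have cAB : #|~: A| = #|~: B|.
  have := cardsC A; have := cardsC B; rewrite card_in_imset //; lia.
set sA := enum (~: A); set sB := enum (~: B).
have ssz : size sA = size sB by rewrite /sA /sB -!cardE.
exists (fun x => if x \in A then f x else nth x sB (index x sA)); split; last first.
  by move=> x ->.
apply: injF_bij => x y.
have hB : forall z, z \notin A -> nth z sB (index z sA) \in ~: B.
  move=> z zA; rewrite -mem_enum mem_nth // -ssz index_mem mem_enum inE //.
have hA : forall z, z \in A -> f z \notin ~: B.
  by move=> z zA; rewrite inE negbK imset_f.
case: ifP => xA; case: ifP => yA.
- exact: fi.
- by move=> fxy; have := hB _ (negbT yA); rewrite -fxy (negbTE (hA _ xA)).
- by move=> fxy; have := hB _ (negbT xA); rewrite fxy (negbTE (hA _ yA)).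
move=> exy.
have xs : x \in sA by rewrite mem_enum inE xA.
have ys : y \in sA by rewrite mem_enum inE yA.
have : index x sA = index y sA.
  have ix : index x sA < size sB by rewrite -ssz index_mem.
  have iy : index y sA < size sB by rewrite -ssz index_mem.
  apply/eqP; rewrite -(nth_uniq x ix iy (enum_uniq _)).
  by rewrite exy (set_nth_default y).
by move/(congr1 (nth x sA)); rewrite !nth_index.
Qed.

Lemma cmi_complete n : CMI (complete_graph n).
Proof.
move=> A cA f fi fh; have [g [gb gf]] := ext_inj fi.
by exists g; split => // x y; rewrite /complete_graph (inj_eq (bij_inj gb)).
Qed.

Lemma cmi_Kss s : CMI (Kss s).
Proof.
move=> A cA f fi fh.
case/andP: (cA) => /set0Pn [a0 a0A] /forallP cc.
set t := (f a0).1 (+) a0.1.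
have ft : forall x, x \in A -> (f x).1 = x.1 (+) t.
  move=> x xA.
  have cx : connect (rin (Kss s) A) a0 x.
    by move: (cc a0); rewrite a0A /= => /forallP /(_ x); rewrite xA.
  have cl : closed (rin (Kss s) A) [pred z | (z \in A) ==> ((f z).1 (+) z.1 == t)].
    move=> u v /and3P [uA vA euv]; rewrite !inE uA vA /=.
    have := fh _ _ uA vA euv; move: euv; rewrite /Kss.
    by case: (u.1); case: (v.1); case: ((f u).1); case: ((f v).1).
  have := closed_connect cl cx; rewrite !inE a0A xA eqxx /= => /esym/eqP <-.
  by case: (x.1); case: ((f x).1).
clearbody t.
have inj_c : forall c, {in [set v | (c, v) \in A] &, injective (fun v => (f (c, v)).2)}.
  move=> c v w; rewrite !inE => vA wA eq2.
  suff: (c, v) = (c, w) by case.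
  apply: fi => //; move: eq2 (ft _ vA) (ft _ wA).
  by case: (f (c,v)) => a b; case: (f (c,w)) => a' b' /= -> -> ->.
have [gT [gTb gTf]] := ext_inj (inj_c true).
have [gF [gFb gFf]] := ext_inj (inj_c false).
exists (fun p => (p.1 (+) t, if p.1 then gT p.2 else gF p.2)); split.
- apply: injF_bij => -[c v] [d w] /= [].
  clear ft; case: c; case: d; case: t => //= _; by [move/(bij_inj gTb)-> | move/(bij_inj gFb)->].
- by clear ft; move=> [c v] [d w]; rewrite /Kss /=; case: c; case: d; case: t.
- move=> [c v] xA /=; rewrite -(ft _ xA) /=.
  case: c xA => xA; rewrite ?gTf ?gFf ?inE //; by case: (f _).
Qed.

Module CycConv.
Import GRing.Theory.
Local Open Scope ring_scope.

Definition adjZ m (a b : 'I_(m.+3)) := (b == a + 1) || (a == b + 1).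

Lemma cycle_adj m (i j : 'I_(m.+3)) : cycle_graph m.+3 i j = adjZ i j.
Proof. by rewrite /cycle_graph /adjZ -!val_eqE /= !modnDmr !addn1. Qed.

Lemma adjZ_sym m (a b : 'I_(m.+3)) : adjZ a b = adjZ b a.
Proof. by rewrite /adjZ orbC. Qed.

Lemma adjZ_E m (a b : 'I_(m.+3)) : adjZ a b = (b == a + 1) || (b == a - 1).
Proof. by rewrite /adjZ [b == a - 1]eq_sym subr_eq. Qed.

Lemma pm1 m (a : 'I_(m.+3)) : a + 1 != a - 1.
Proof.
apply/eqP => /addrI /eqP; rewrite -val_eqE /= !modn_small // subn1.
Qed.

Lemma two_nb m (a p q w : 'I_(m.+3)) :
  adjZ a p -> adjZ a q -> adjZ a w -> p != q -> w != p -> w = q.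
Proof.
rewrite !adjZ_E => /orP [] /eqP -> /orP [] /eqP -> /orP [] /eqP -> //;
  by rewrite ?eqxx.
Qed.

Definition hc m (eps : bool) (c x : 'I_(m.+3)) := if eps then x + c else c - x.

Lemma hc_adj m eps (c a b : 'I_(m.+3)) : adjZ (hc eps c a) (hc eps c b) = adjZ a b.
Proof.
rewrite /adjZ /hc; case: eps.
  by rewrite addrAC (inj_eq (addIr c)) addrAC (inj_eq (addIr c)).
have E1 : (c - b == c - a + 1) = (a == b + 1).
  apply/eqP/eqP => H.
    have -> : a = c - (c - a + 1) + 1 by ring.
    by rewrite -H; ring.
  by rewrite H; ring.
have E2 : (c - a == c - b + 1) = (b == a + 1).
  apply/eqP/eqP => H.
    have -> : b = c - (c - b + 1) + 1 by ring.
    by rewrite -H; ring.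
  by rewrite H; ring.
by rewrite E1 E2 orbC.
Qed.

Lemma hc_bij m eps (c : 'I_(m.+3)) : bijective (hc eps c).
Proof.
case: eps; last by exists (hc false c) => x; rewrite /hc; ring.
by exists (hc true (- c)) => x; rewrite /hc; ring.
Qed.

Lemma two_pt m (a b a' b' : 'I_(m.+3)) : adjZ a b -> adjZ a' b' ->
  exists eps c, hc eps c a = a' /\ hc eps c b = b'.
Proof.
rewrite !adjZ_E => /orP [] /eqP -> /orP [] /eqP ->.
- by exists true, (a' - a); split; rewrite /hc; ring.
- by exists false, (a' + a); split; rewrite /hc; ring.
- by exists false, (a' + a); split; rewrite /hc; ring.
- by exists true, (a' - a); split; rewrite /hc; ring.
Qed.

Lemma cycle_graph_sym m : symmetric (cycle_graph m.+3).
Proof. by move=> x y; rewrite !cycle_adj adjZ_sym. Qed.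

Lemma cmi_cycle m : CMI (cycle_graph m.+3).
Proof.
move=> A cA f fi fh.
have fh' : {in A &, forall x y, adjZ x y -> adjZ (f x) (f y)}.
  by move=> x y xA yA; rewrite -!cycle_adj; apply: fh.
case/andP: (cA) => /set0Pn [a0 a0A] /forallP cc.
have [eps [c Q0]] : exists eps c, (f a0 == hc eps c a0) &&
    [forall z, ((z \in A) && adjZ a0 z) ==> (f z == hc eps c z)].
  case: (boolP [exists b, (b \in A) && adjZ a0 b]).
    case/existsP => b /andP [bA ab].
    have [eps [c [h0 hb]]] := two_pt ab (fh' _ _ a0A bA ab).
    exists eps, c; rewrite h0 eqxx /=; apply/forallP => z; apply/implyP => /andP [zA az].
    case: (eqVneq z b) => [-> | zb]; first by rewrite hb.
    apply/eqP; apply: (@two_nb _ (f a0) (f b)).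
    + by rewrite -hb -h0 hc_adj.
    + by rewrite -h0 hc_adj.
    + exact: fh'.
    + by rewrite -hb (inj_eq (bij_inj (hc_bij _ _))) eq_sym.
    + by apply/eqP => /fi; move/(_ zA bA)/eqP; rewrite (negbTE zb).
  move=> nb; exists true, (f a0 - a0); rewrite /hc; apply/andP; split.
    by apply/eqP; ring.
  apply/forallP => z; apply/implyP => zz; case/negP: nb; by apply/existsP; exists z.
set h := hc eps c.
have hinj : injective h := bij_inj (hc_bij _ _).
have cl : closed (rin (cycle_graph m.+3) A)
   [pred z | (z \in A) ==> (f z == h z) &&
      [forall w, ((w \in A) && adjZ z w) ==> (f w == h w)]].
  apply: intro_closed; first by apply: sym_connect_sym; apply: rin_sym; apply: cycle_graph_sym.
  move=> x y /and3P [xA yA]; rewrite cycle_adj => axy; rewrite !inE xA yA /=.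
  case/andP => /eqP fx /forallP Hx.
  have fy : f y = h y by apply/eqP; move/implyP: (Hx y); apply; rewrite yA axy.
  rewrite fy eqxx /=; apply/forallP => w; apply/implyP => /andP [wA yw]; apply/eqP.
  case: (eqVneq w x) => [-> // | wx].
  apply: (@two_nb _ (f y) (f x)).
  + by rewrite fy fx /h hc_adj adjZ_sym.
  + by rewrite fy /h hc_adj.
  + exact: fh'.
  + by rewrite fx (inj_eq hinj) eq_sym.
  + by apply/eqP => /fi; move/(_ wA xA)/eqP; rewrite (negbTE wx).
exists h; split; first exact: hc_bij.
  by move=> x y; rewrite !cycle_adj hc_adj.
move=> x xA.
have cx : connect (rin (cycle_graph m.+3) A) a0 x.
  by move: (cc a0); rewrite a0A /= => /forallP /(_ x); rewrite xA.
have := closed_connect cl cx; rewrite !inE a0A xA Q0 /= => /esym.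
by case/andP => /eqP.
Qed.

End CycConv.
Import CycConv.


Theorem theorem4p2 (T : finType) (e : rel T)
  (e_sym : symmetric e) (e_irr : irreflexive e) :
  CMI e <->
  [\/ exists (k n : nat), 1 <= n /\ graph_iso e (copies k (complete_graph n)),
      exists (k s : nat), 2 <= s /\ graph_iso e (copies k (Kss s))
    | exists (k n : nat), 3 <= n /\ graph_iso e (copies k (cycle_graph n))].
Proof.
split; last first.
  case=> [[k [n [_ iso]]]|[k [s [_ iso]]]|[k [n [n3 iso]]]].
  - apply: (cmi_iso iso); apply: cmi_copies; exact: cmi_complete.
  - apply: (cmi_iso iso); apply: cmi_copies; exact: cmi_Kss.
  - case: n n3 iso => [|[|[|m]]] // _ iso.
    apply: (cmi_iso iso); apply: cmi_copies; exact: cmi_cycle.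
move=> H.
have cs := sym_connect_sym e_sym.
case: (pickP (fun _ : T => true)) => [v0 _ | T0]; last first.
  have F : T -> 'I_0 * 'I_1 by move=> x; have := T0 x.
  have G : 'I_0 * 'I_1 -> T by move=> [[i ip] _].
  apply: Or31; exists 0, 1; split => //; exists F; split.
    by exists G => [x|[[i ip] _]] //; have := T0 x.
  by move=> x; have := T0 x.
case: (boolP [forall a, forall b, forall c, e a b ==> e b c ==> (a != c) ==> e a c]).
  move=> /forallP nP3.
  have cl : forall x y, connect e x y -> x != y -> e x y.
    apply: clique_of_noP3 => // a b c ab bc ac.
    by move/forallP: (nP3 a) => /(_ b) /forallP /(_ c); rewrite ab bc ac.
  set C := [set x | connect e v0 x].
  have v0C : v0 \in C by rewrite inE connect0.
  have [k iso] : exists k, graph_iso e (copies k (complete_graph #|C|)).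
    apply: (@glue _ _ e_sym _ _ v0 (fun i : 'I_#|C| => enum_val i)).
    - by move=> r; exact: vt.
    - exact: enum_val_inj.
    - by move=> i; have := enum_valP i; rewrite inE.
    - move=> x cx; have xC : x \in C by rewrite inE.
      by exists (enum_rank_in xC x); rewrite enum_rankK_in.
    - move=> i j; rewrite /complete_graph.
      case: (eqVneq i j) => [-> | ij]; first by rewrite e_irr.
      apply: cl; last by rewrite (inj_eq enum_val_inj).
      have := enum_valP i; have := enum_valP j; rewrite !inE => cj ci.
      by apply: connect_trans cj; rewrite cs.
  apply: Or31; exists k, #|C|; split => //.
  by rewrite card_gt0; apply/set0Pn; exists v0.
move/forallPn => [a /forallPn [b /forallPn [c]]].
rewrite !negb_imply => /and4P [ab bc ac nac].
have tf := triangle_free e_sym e_irr H ab bc nac ac.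
have dreg := deg_reg e_irr H.
have d2 : 1 < #|Nb e v0|.
  rewrite (dreg v0 b); apply/card_gt1P; exists a, c; split => //; rewrite inE //.
  by rewrite e_sym.
case: (eqVneq #|Nb e v0| 2) => [d2'|d3].
  have deg2 : forall x, #|Nb e x| = 2 by move=> x; rewrite (dreg x v0).
  have [n [n3 [k iso]]] := cyc_iso e_sym e_irr H v0 deg2.
  by apply: Or33; exists k, n.
have deg3 : forall x, 2 < #|Nb e x| by move=> x; rewrite (dreg x v0); lia.
have p4 := deg3_P4free e_sym e_irr H deg3.
have [k iso] := bip_iso e_sym e_irr H tf p4 (ltnW d2).
by apply: Or32; exists k, #|Nb e v0|.
Qed.
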